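(* Let $m,n\ge 2$. The Hadamard product of two $m$th order $n$-dimensional strong Hankel tensors is a strong Hankel tensor.
   Context: An $m$th order $n$-dimensional real tensor $\mathcal{A}=(a_{i_1\cdots i_m})$ is a Hankel tensor if there is $v=(v_0,\dots,v_{(n-1)m})^\top\in\mathbb{R}^{(n-1)m+1}$ with $a_{i_1\cdots i_m}=v_{i_1+\cdots+i_m-m}$ for all $i_j\in\{1,\dots,n\}$. Let $N=\lceil((n-1)m+2)/2\rceil$. An associated Hankel matrix of $\mathcal{A}$ is the $N\times N$ matrix with $(i,j)$ entry $v_{i+j-2}$, where, if $(n-1)m$ is odd, $v_{2\lceil(n-1)m/2\rceil}$ is an additional (arbitrary) real number. $\mathcal{A}$ is a strong Hankel tensor if an associated Hankel matrix of it is positive semi-definite. The Hadamard product of $\mathcal{A}=(a_{i_1\cdots i_m})$ and $\mathcal{B}=(b_{i_1\cdots i_m})$ is $\mathcal{A}\circ\mathcal{B}=(a_{i_1\cdots i_m}b_{i_1\cdots i_m})$. *)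

(* Defs.v *)
From mathcomp Require Import all_boot all_order all_algebra.
Set Implicit Arguments. Unset Strict Implicit. Unset Printing Implicit Defensive.
Import Order.TTheory GRing.Theory Num.Theory.
Local Open Scope ring_scope.

(* An m-th order n-dimensional real tensor: entries indexed by m-tuples of
   indices in {0,...,n-1} (0-based; the paper's i_j corresponds to i_j - 1). *)
Definition tensor (R : Type) (m n : nat) := m.-tuple 'I_n -> R.

(* sum of the (0-based) indices: i_1 + ... + i_m - m in the paper's 1-based convention *)
Definition idx_sum (m n : nat) (i : m.-tuple 'I_n) : nat :=
  (\sum_(k <- i) (nat_of_ord k))%N.

(* A is Hankel with generating vector v; v is represented as a function
   nat -> R of which only v_0, ..., v_{(n-1)m} matter (idx_sum i <= (n-1)m). *)
Definition hankel_gen (R : Type) (m n : nat) (A : tensor R m n) (v : nat -> R) : Prop :=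
  forall i : m.-tuple 'I_n, A i = v (idx_sum i).

Definition is_hankel_tensor (R : Type) (m n : nat) (A : tensor R m n) : Prop :=
  exists v, hankel_gen A v.

(* N = ceil(((n-1)m + 2)/2) *)
Definition hankel_N (m n : nat) : nat := ((n.-1 * m).+3)./2.

Definition hankel_matrix (R : Type) (N : nat) (w : nat -> R) : 'M[R]_N :=
  \matrix_(i < N, j < N) w (i + j)%N.

Definition psd (R : numDomainType) (N : nat) (M : 'M[R]_N) : Prop :=
  forall x : 'cV[R]_N, 0 <= (x^T *m M *m x) 0 0.

(* When (n-1)m is odd the matrix uses the entry
   v_{(n-1)m+1}, which is not determined by A: since v is an arbitrary
   function nat -> R, that entry is an arbitrary real number, as in the paper. *)
Definition is_assoc_hankel_matrix (R : Type) (m n : nat) (A : tensor R m n)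
    (H : 'M[R]_(hankel_N m n)) : Prop :=
  exists v : nat -> R, hankel_gen A v /\ H = hankel_matrix (hankel_N m n) v.

Definition is_strong_hankel (R : numDomainType) (m n : nat) (A : tensor R m n) : Prop :=
  is_hankel_tensor A /\
  exists H : 'M[R]_(hankel_N m n), is_assoc_hankel_matrix A H /\ psd H.

Definition hadamard (R : pzRingType) (m n : nat) (A B : tensor R m n) : tensor R m n :=
  fun i => A i * B i.

(* Main.v *)
Require Import Defs.
From mathcomp Require Import all_boot all_order all_algebra.
From mathcomp Require Import ring lra.
Import Order.TTheory GRing.Theory Num.Theory.
Local Open Scope ring_scope.

Section S.
Variable R : realFieldType.
Variable N : nat.
Implicit Types (A B : 'M[R]_N) (x y : 'I_N -> R).

Definition bil A x y := \sum_i \sum_j x i * A i j * y j.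
Definition qf A x := bil A x x.
Definition psdq A := forall x, 0 <= qf A x.
Definition symm A := forall i j, A i j = A j i.
Definition ev (k : 'I_N) : 'I_N -> R := fun i => (i == k)%:R.

Lemma sum_delta (k : 'I_N) (F : 'I_N -> R) : \sum_i (i == k)%:R * F i = F k.
Proof.
rewrite (bigD1 k) //= eqxx mul1r big1 ?addr0 // => i /negbTE ->; by rewrite mul0r.
Qed.

Lemma sum_delta' (k : 'I_N) (F : 'I_N -> R) : \sum_i F i * (i == k)%:R = F k.
Proof.
rewrite (bigD1 k) //= eqxx mulr1 big1 ?addr0 // => i /negbTE ->; by rewrite mulr0.
Qed.

Lemma bil_ev A k l : bil A (ev k) (ev l) = A k l.
Proof.
rewrite /bil /ev.
under eq_bigr => i _ do under eq_bigr => j _ do rewrite -mulrA.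
under eq_bigr => i _ do rewrite -mulr_sumr sum_delta'.
by rewrite sum_delta.
Qed.

Lemma bil_evl A k y : bil A (ev k) y = \sum_j A k j * y j.
Proof.
rewrite /bil /ev.
under eq_bigr => i _ do under eq_bigr => j _ do rewrite -mulrA.
by under eq_bigr => i _ do rewrite -mulr_sumr; rewrite sum_delta.
Qed.

Lemma bil_evr A k x : bil A x (ev k) = \sum_i x i * A i k.
Proof.
rewrite /bil /ev.
by under eq_bigr => i _ do rewrite sum_delta'.
Qed.

Lemma qf_expand A x y t :
  qf A (fun i => x i + t * y i) = qf A x + t * (bil A x y + bil A y x) + t ^+ 2 * qf A y.
Proof.
rewrite /qf /bil.
transitivity (\sum_i \sum_j (x i * A i j * x j + t * (x i * A i j * y j + y i * A i j * x j)
   + t ^+ 2 * (y i * A i j * y j))).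
  by apply: eq_bigr => i _; apply: eq_bigr => j _; ring.
under eq_bigr => i _ do rewrite !big_split /= -!mulr_sumr.
rewrite !big_split /= -!mulr_sumr.
congr (_ + _ * _ + _); rewrite -big_split; apply: eq_bigr => i _; by rewrite big_split.
Qed.

Lemma diag_zero A k j : symm A -> psdq A -> A k k = 0 -> A k j = 0.
Proof.
move=> sA pA akk; apply/eqP/negPn/negP => nz.
pose t := - (A j j + 1) / (2 * A k j).
have := pA (fun i => ev j i + t * ev k i).
rewrite qf_expand /qf !bil_ev akk mulr0 addr0 (sA j k).
have -> : t * (A k j + A k j) = - (A j j + 1).
  by rewrite /t; field; exact: nz.
lra.
Qed.

Lemma diag_ge0 A k : psdq A -> 0 <= A k k.
Proof. by move=> pA; have := pA (ev k); rewrite /qf bil_ev. Qed.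

Definition hprod A B : 'M[R]_N := \matrix_(i, j) (A i j * B i j).

Lemma schur_ind B : psdq B -> forall n A, (#|[pred k | A k k != 0%R]| <= n)%N ->
  symm A -> psdq A -> psdq (hprod A B).
Proof.
move=> pB; elim=> [|n IH] A.
  rewrite leqn0 => /eqP /card0_eq c0 sA pA x.
  rewrite /qf /bil big1 // => i _; rewrite big1 // => j _.
  rewrite mxE (@diag_zero A i j sA pA) ?mul0r ?mulr0 ?mul0r //.
  by have := c0 i; rewrite !inE => /negbT; rewrite negbK => /eqP.
move=> cn sA pA.
case: (pickP [pred k | A k k != 0]) => [k /= akk | h].
  pose A' : 'M[R]_N := \matrix_(i, j) (A i j - A i k * A k j / A k k).
  have sA' : symm A'.
    by move=> i j; rewrite !mxE (sA i j) (sA i k) (sA k j); ring.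
  have pA' : psdq A'.
    move=> x; pose s := (\sum_j A k j * x j) / A k k.
    have := pA (fun i => x i + (- s) * ev k i).
    have -> : qf A (fun i => x i + (- s) * ev k i) = qf A' x; last by [].
    rewrite qf_expand bil_evl bil_evr /qf bil_ev.
    have e : \sum_i x i * A i k = \sum_j A k j * x j.
      by apply: eq_bigr => i _; rewrite (sA i k) mulrC.
    rewrite e /bil.
    under [RHS]eq_bigr => i _ do under eq_bigr => j _ do
      rewrite mxE (sA i k) mulrBr mulrBl.
    under [RHS]eq_bigr => i _ do rewrite big_split /= sumrN.
    rewrite big_split /= sumrN.
    have -> : \sum_i \sum_j x i * (A k i * A k j / A k k) * x j
        = (\sum_j A k j * x j) ^+ 2 / A k k.
      rewrite expr2 mulr_suml mulr_suml; apply: eq_bigr => i _.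
      rewrite mulr_sumr mulr_suml; apply: eq_bigr => j _; ring.
    rewrite /s; field; exact: akk.
  have akk0 : 0 < A k k by rewrite lt_def akk (@diag_ge0 A k pA).
  have cA' : (#|[pred j | A' j j != 0%R]| <= n)%N.
    rewrite -ltnS; apply: leq_trans cn; apply: proper_card.
    apply/properP; split.
      apply/subsetP => j; rewrite !inE mxE; apply: contraNN => /eqP ajj.
      by rewrite (@diag_zero A j k sA pA ajj) (sA k j) (@diag_zero A j k sA pA ajj) !mul0r subr0 ajj.
    exists k; rewrite !inE ?akk // mxE negbK.
    apply/eqP; field; exact: akk.
  have pIH := IH A' cA' sA' pA'.
  move=> x; have := pIH x; have := pB (fun i => A i k * x i).
  have -> : qf (hprod A B) x = qf (hprod A' B) x + (A k k)^-1 * qf B (fun i => A i k * x i).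
    rewrite /qf /bil mulr_sumr -big_split; apply: eq_bigr => i _.
    rewrite mulr_sumr -big_split; apply: eq_bigr => j _.
    rewrite !mxE (sA k j) /=; ring.
  move=> h1 h2; apply: addr_ge0 => //; apply: mulr_ge0 => //.
  by rewrite invr_ge0 ltW.
move=> x; rewrite /qf /bil big1 // => i _; rewrite big1 // => j _.
rewrite mxE (@diag_zero A i j sA pA) ?mul0r ?mulr0 ?mul0r //.
by have := h i; rewrite /= => /negbT; rewrite negbK => /eqP.
Qed.

Lemma psd_psdq A : psd A <-> psdq A.
Proof.
have E : forall x : 'cV[R]_N, (x^T *m A *m x) 0 0 = qf A (fun i => x i 0).
  move=> x; rewrite /qf /bil mxE exchange_big /=; apply: eq_bigr => j _.
  rewrite mxE mulr_suml; apply: eq_bigr => i _; by rewrite mxE.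
split=> h x.
  have := h (\col_i x i); rewrite E /qf /bil.
  by under eq_bigr => i _ do under eq_bigr => j _ do rewrite !mxE.
by rewrite E.
Qed.

End S.

Theorem proposition2 (R : realFieldType) (m n : nat) (hm : (2 <= m)%N) (hn : (2 <= n)%N)
    (A B : tensor R m n) :
  is_strong_hankel A -> is_strong_hankel B -> is_strong_hankel (hadamard A B).
Proof.
move=> [_ [HA [[v [gv ->]] pA]]] [_ [HB [[w [gw ->]] pB]]].
have g : hankel_gen (hadamard A B) (fun k => v k * w k).
  by move=> i; rewrite /hadamard gv gw.
split; first by exists (fun k => v k * w k).
exists (hankel_matrix (hankel_N m n) (fun k => v k * w k)); split.
  by exists (fun k => v k * w k).
apply/(@psd_psdq R _ _).
have -> : hankel_matrix (hankel_N m n) (fun k => v k * w k) =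
   @hprod R _ (hankel_matrix (hankel_N m n) v) (hankel_matrix (hankel_N m n) w).
  by apply/matrixP => i j; rewrite !mxE.
have pB' := proj1 (@psd_psdq R _ _) pB.
apply: (@schur_ind R _ _ pB' _ _ (leqnn _)).
  by move=> i j; rewrite !mxE addnC.
exact/(@psd_psdq R _ _).
Qed.
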